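(* Let $k$ and $a_n$ be integers with $a_n\ge k-1\ge 2$, and let $n=a_nk$. Then $src^*(C_n(\{1,k\}))=rc^*(C_n(\{1,k\}))=a_n+k-2$.
   Context: For $n\ge 2$ and $S\subseteq\{1,\dots,n-1\}$, the circulant digraph $C_n(S)$ has vertex set $\{v_0,\dots,v_{n-1}\}$ and arcs $v_iv_j$ for all $i,j$ with $j-i\equiv s \pmod n$ for some $s\in S$. For a strongly connected digraph $D$ and an arc-colouring $\Gamma:A(D)\to\{1,\dots,k\}$, a directed path is rainbow if its arcs have pairwise distinct colours. $\Gamma$ is rainbow connected if for every ordered pair of distinct vertices $x,y$ there is a rainbow directed $xy$-path; $rc^*(D)$ is the minimum number of colours of such a colouring. $\Gamma$ is strongly rainbow connected if for every ordered pair of distinct vertices $x,y$ there is a rainbow directed $xy$-path of length $d_D(x,y)$; $src^*(D)$ is the minimum such number. *)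

(* Defs.v *)
From mathcomp Require Import all_boot.
Set Implicit Arguments. Unset Strict Implicit. Unset Printing Implicit Defensive.

Definition circulant (n : nat) (S : seq nat) : rel 'I_n :=
  fun i j => ((j + n - i) %% n) \in S.

(* A directed xy-path in D: vertex sequence x :: p, consecutive vertices joined
   by arcs, ending at y, with no repeated vertex.  Its length is size p. *)
Definition dipath (n : nat) (D : rel 'I_n) (x y : 'I_n) (p : seq 'I_n) : bool :=
  [&& path D x p, last x p == y & uniq (x :: p)].

(* An arc-colouring with k colours is c : 'I_n -> 'I_n -> 'I_k (only its values
   on arcs matter).  A path is rainbow if its arcs have pairwise distinct colours. *)
Definition rainbow (n k : nat) (c : 'I_n -> 'I_n -> 'I_k) (x : 'I_n) (p : seq 'I_n) : bool :=
  uniq (pairmap c x p).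

Definition rainbow_connected (n k : nat) (D : rel 'I_n) (c : 'I_n -> 'I_n -> 'I_k) : Prop :=
  forall x y : 'I_n, x != y -> exists p, dipath D x y p && rainbow c x p.

Definition strongly_rainbow_connected (n k : nat) (D : rel 'I_n)
    (c : 'I_n -> 'I_n -> 'I_k) : Prop :=
  forall x y : 'I_n, x != y -> exists p, [/\ dipath D x y p, rainbow c x p &
    forall q, dipath D x y q -> size p <= size q].

Definition rc_colourable (n : nat) (D : rel 'I_n) (k : nat) : Prop :=
  exists c : 'I_n -> 'I_n -> 'I_k, rainbow_connected D c.

Definition src_colourable (n : nat) (D : rel 'I_n) (k : nat) : Prop :=
  exists c : 'I_n -> 'I_n -> 'I_k, strongly_rainbow_connected D c.

Definition rc_star_eq (n : nat) (D : rel 'I_n) (m : nat) : Prop :=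
  rc_colourable D m /\ forall k, rc_colourable D k -> m <= k.

Definition src_star_eq (n : nat) (D : rel 'I_n) (m : nat) : Prop :=
  src_colourable D m /\ forall k, src_colourable D k -> m <= k.
Arguments circulant n S i j : clear implicits.

(* Main.v *)
Require Import Defs.
From mathcomp Require Import all_boot zify.
Set Implicit Arguments. Unset Strict Implicit. Unset Printing Implicit Defensive.

Lemma modn_split (w an k : nat) :
  w %% (an * k) = (w %/ k %% an) * k + w %% k.
Proof.
case: (posnP k) => [->|kpos]; first by rewrite muln0 !modn0 divn0 mod0n.
case: (posnP an) => [->|anpos]; first by rewrite !mul0n modn0 modn0 {1}(divn_eq w k).
have Hlt : (w %/ k %% an) * k + w %% k < an * k.
  have h1 := ltn_pmod (w %/ k) anpos. have h2 := ltn_pmod w kpos. nia.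
rewrite {1}(divn_eq w k) {1}(divn_eq (w %/ k) an).
rewrite mulnDl -addnA -mulnA modnMDl modn_small //.
Qed.

Lemma div_modn_split (w an k : nat) : 0 < k ->
  (w %% (an * k)) %/ k = w %/ k %% an.
Proof. by move=> kpos; rewrite modn_split (divnMDl _ _ kpos) (divn_small (ltn_pmod w kpos)) addn0. Qed.

Lemma mod_modn_split (w an k : nat) : 0 < k ->
  (w %% (an * k)) %% k = w %% k.
Proof. by move=> kpos; rewrite modn_split modnMDl modn_mod. Qed.

Lemma diff_step (n w d : nat) : 0 < n -> d < n ->
  ((w + d) %% n + n - w %% n) %% n = d.
Proof.
move=> npos dn.
have h1 := ltn_pmod w npos.
apply/eqP; rewrite -(modn_small dn) -(eqn_modDl (w %% n)).
rewrite addnBA; last by rewrite ltnW // ltn_addl.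
rewrite addnC addnK modnDr modnDml modn_mod.
by apply/eqP; rewrite modnDmr.
Qed.

Lemma arc_next (n : nat) (u v : 'I_n) (d : nat) :
  (v + n - u) %% n = d -> val v = (u + d) %% n.
Proof.
move=> <-. have vn := ltn_ord v. have un := ltn_ord u.
rewrite modnDmr addnBA; last by rewrite ltnW // ltn_addl.
by rewrite addnC addnK modnDr modn_small.
Qed.

Lemma walk_count (n k : nat) (x : 'I_n) (p : seq 'I_n) :
  path (circulant n [:: 1; k]) x p ->
  exists a1 ak, a1 + ak = size p /\ (x + a1 + ak * k) %% n = last x p.
Proof.
elim: p x => [|z p IH] x /=.
  by move=> _; exists 0, 0; rewrite !addn0 modn_small.
move=> /andP [hxz hp]. have [a1 [ak [hs he]]] := IH z hp.
rewrite /circulant !inE in hxz.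
have hz : forall d, (z + n - x) %% n = d -> (x + a1 + d + ak * k) %% n = last z p.
  move=> d /arc_next hzv. rewrite -he hzv -!addnA modnDml !addnA; congr (_ %% n); lia.
case/orP: hxz => /eqP hd; have H := hz _ hd.
  exists a1.+1, ak; split; first by rewrite -hs; lia.
  by rewrite -H; congr (_ %% n); lia.
exists a1, ak.+1; split; first by rewrite -hs; lia.
rewrite -H; congr (_ %% n); rewrite mulSn; lia.
Qed.

Lemma diff_gen (n x T : nat) : x < n ->
  ((x + T) %% n + n - x) %% n = T %% n.
Proof.
move=> xn. have npos : 0 < n by case: n xn.
have := @diff_step n x (T %% n) npos (ltn_pmod T npos).
by rewrite modnDmr (modn_small xn).
Qed.

Lemma dist_lb (an k : nat) (x y : 'I_(an*k)) a1 ak : 0 < k ->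
  (x + a1 + ak * k) %% (an*k) = y ->
  (y + an*k - x) %% (an*k) %/ k + (y + an*k - x) %% (an*k) %% k <= a1 + ak.
Proof.
move=> kpos He. rewrite -He -addnA diff_gen ?ltn_ord //.
rewrite div_modn_split // mod_modn_split //.
have h3 : (a1 + ak*k) %% k = a1 %% k by rewrite addnC modnMDl.
rewrite addnC divnDMl // h3.
have h1 := leq_mod (a1 %/ k + ak) an.
have h2 := divn_eq a1 k.
have h4 : a1 %/ k <= a1 %/ k * k by rewrite leq_pmulr.
lia.
Qed.


Definition Dst (k a r j : nat) := minn j a * k + minn (j - a) r + (j - (a + r)) * k.

Lemma Dst_pre k a r j : j <= a -> Dst k a r j = j * k.
Proof. move=> h; rewrite /Dst (minn_idPl h). have -> : j - a = 0 by lia. have -> : j - (a + r) = 0 by lia. rewrite mul0n addn0; lia. Qed.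

Lemma Dst_mid k a r j : a <= j <= a + r -> Dst k a r j = a * k + (j - a).
Proof. move=> /andP [h1 h2]; rewrite /Dst. have -> : minn j a = a by lia. have -> : minn (j - a) r = j - a by lia. have -> : j - (a + r) = 0 by lia. by rewrite mul0n addn0. Qed.

Lemma Dst_post k a r j : a + r <= j -> Dst k a r j = a * k + r + (j - (a + r)) * k.
Proof. move=> h; rewrite /Dst. have -> : minn j a = a by lia. by have -> : minn (j - a) r = r by lia. Qed.

Lemma Dst_step k a r j : Dst k a r j.+1 = Dst k a r j + (if (a <= j) && (j < a + r) then 1 else k).
Proof.
case: (ltnP j a) => h1 /=.
  by rewrite !Dst_pre ?mulSn; lia.
case: (ltnP j (a + r)) => h2 /=.
  by rewrite !Dst_mid; lia.
rewrite !Dst_post; try lia. have -> : j.+1 - (a + r) = (j - (a + r)).+1 by lia. rewrite mulSn; lia.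
Qed.

Lemma Dst_mono k a r i j : 0 < k -> i < j -> Dst k a r i < Dst k a r j.
Proof.
move=> kpos; elim: j => [//|j IH]. rewrite ltnS leq_eqVlt => /orP [/eqP ->|hij].
  rewrite Dst_step; case: ifP => _; lia.
rewrite Dst_step; have := IH hij; case: ifP => _; lia.
Qed.

Lemma Dst_end k a r q : a <= q -> Dst k a r (q + r) = q * k + r.
Proof. move=> h. rewrite Dst_post; last lia. have -> : q + r - (a + r) = q - a by lia.
have -> : q = a + (q - a) by lia. rewrite mulnDl. lia. Qed.

Section Iota.
Variables (T T2 : Type) (f : nat -> T).
Lemma path_iota (e : rel T) i L :
  path e (f i) [seq f j | j <- iota i.+1 L] = all (fun j => e (f j) (f j.+1)) (iota i L).
Proof. by elim: L i => [|L IH] i //=; rewrite IH. Qed.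
Lemma last_iota i L : last (f i) [seq f j | j <- iota i.+1 L] = f (i + L).
Proof. elim: L i => [|L IH] i /=; first by rewrite addn0. by rewrite IH addSnnS. Qed.
Lemma pairmap_iota (g : T -> T -> T2) i L :
  pairmap g (f i) [seq f j | j <- iota i.+1 L] = [seq g (f j) (f j.+1) | j <- iota i L].
Proof. by elim: L i => [|L IH] i //=; rewrite IH. Qed.
End Iota.


Definition ordn (n : nat) (npos : 0 < n) (v : nat) : 'I_n := Ordinal (ltn_pmod v npos).

Section Walk.
Variables (an k : nat) (npos : 0 < an * k) (kpos : 0 < k) (kn : k < an * k) (onen : 1 < an * k).
Variable x : 'I_(an * k).
Variables (a r q : nat) (haq : a <= q) (hq : q < an) (hr : r < k).

Definition vert j : 'I_(an * k) := ordn npos (x + Dst k a r j).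
Definition pathO := [seq vert j | j <- iota 1 (q + r)].

Lemma vert0 : vert 0 = x.
Proof. apply: val_inj => /=. rewrite Dst_pre // mul0n addn0 modn_small //. Qed.

Lemma stepv j : ((vert j.+1 : nat) + an * k - vert j) %% (an * k) =
   (if (a <= j) && (j < a + r) then 1 else k).
Proof.
rewrite /= Dst_step addnA diff_step //. by case: ifP.
Qed.

Lemma arc_vert j : circulant (an * k) [:: 1; k] (vert j) (vert j.+1).
Proof. by rewrite /circulant stepv; case: ifP; rewrite !inE eqxx ?orbT. Qed.

Lemma Dst_lt j : j <= q + r -> Dst k a r j < an * k.
Proof.
move=> hj. have h : Dst k a r j <= Dst k a r (q + r).
  by rewrite leq_eqVlt; case: (ltngtP j (q+r)) => // h; [rewrite Dst_mono ?orbT|lia|rewrite h eqxx].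
rewrite Dst_end // in h. apply: (leq_ltn_trans h). nia.
Qed.

Lemma vert_inj i j : i <= q + r -> j <= q + r -> vert i = vert j -> i = j.
Proof.
move=> hi hj /(congr1 val) /= /eqP. rewrite eqn_modDl !modn_small ?Dst_lt // => /eqP hD.
case: (ltngtP i j) => // h; have := Dst_mono a r kpos h; lia.
Qed.

Lemma dipath_pathO : dipath (circulant (an * k) [:: 1; k]) x (ordn npos (x + (q * k + r))) pathO.
Proof.
rewrite /dipath /pathO -[in path _ x _]vert0 -[in last x _]vert0 -[in x :: _]vert0 path_iota last_iota. apply/and3P; split.
- by apply/allP => j _; apply: arc_vert.
- by apply/eqP/val_inj; rewrite /= Dst_end.
have -> : vert 0 :: [seq vert j | j <- iota 1 (q + r)] = [seq vert j | j <- iota 0 (q + r).+1] by [].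
rewrite map_inj_in_uniq ?iota_uniq // => i j; rewrite !mem_iota => /andP [_ hi] /andP [_ hj].
apply: vert_inj; lia.
Qed.

Lemma size_pathO : size pathO = q + r.
Proof. by rewrite size_map size_iota. Qed.

End Walk.

Lemma min_walk (an k : nat) (x y : 'I_(an*k)) (p : seq 'I_(an*k)) : 0 < k ->
  dipath (circulant (an * k) [:: 1; k]) x y p ->
  (y + an*k - x) %% (an*k) %/ k + (y + an*k - x) %% (an*k) %% k <= size p.
Proof.
move=> kpos /and3P [hp /eqP hl _].
have [a1 [ak [hs he]]] := walk_count hp.
rewrite -hs; apply: dist_lb => //. by rewrite he hl.
Qed.


Section Colour.
Variables (an k : nat).

Definition sf (b : nat) := minn b (k - 2).
Definition col1 (u : nat) : nat :=
  let b := u %/ k in let p := u %% k in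
  if p == k.-1 then b else if p == sf b then b.+1 %% an else an + p - (sf b < p).
Definition cval (u v : nat) : nat :=
  if (v + an * k - u) %% (an * k) == 1 then col1 u else u %/ k.

Lemma divmodS (X R : nat) : R < k -> (X * k + R) %/ k = X /\ (X * k + R) %% k = R.
Proof.
move=> hR. have kpos : 0 < k by case: k hR.
by rewrite divnMDl // divn_small // addn0 modnMDl modn_small.
Qed.

Hypotheses (hk : 3 <= k) (han : 3 <= an).
Let kpos : 0 < k. Proof. lia. Qed.
Let npos : 0 < an * k. Proof. nia. Qed.
Let kn : k < an * k. Proof. nia. Qed.
Let onen : 1 < an * k. Proof. nia. Qed.

Variable x : 'I_(an * k).
Variables (a r q : nat) (haq : a <= q) (hq : q < an) (hr : r < k).

Let B0 := x %/ k.
Let r0 := x %% k.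
Let hx : val x = B0 * k + r0. Proof. exact: divn_eq. Qed.
Let hr0 : r0 < k. Proof. exact: ltn_pmod. Qed.
Let cb := (k <= r0 + r).
Let sb := sf ((B0 + a) %% an).
Let sb' := sf ((B0 + a).+1 %% an).

Definition code (j : nat) : bool * nat :=
  if j < a then (true, j)
  else if j < a + r then
    if r0 + (j - a) < k.-1 then
      (if r0 + (j - a) == sb then (true, a.+1) else (false, r0 + (j - a) - (sb < r0 + (j - a))))
    else if r0 + (j - a) == k.-1 then (true, a)
    else (if r0 + (j - a) - k == sb' then (true, a.+2)
          else (false, r0 + (j - a) - k - (sb' < r0 + (j - a) - k)))
  else (true, j - r + cb).

Definition interp (c : bool * nat) : nat := if c.1 then (B0 + c.2) %% an else an + c.2.

Let vj j := vert npos x a r j.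

Lemma cv_code j : j < q + r -> cval (vj j) (vj j.+1) = interp (code j).
Proof.
move=> hj. rewrite /cval stepv //.
have hval : forall i, val (vj i) = (x + Dst k a r i) %% (an * k) by [].
rewrite hval div_modn_split //.
rewrite /code.
case: (ltnP j a) => h1 /=.
  have hk1 : (k == 1) = false by apply/eqP; lia.
  rewrite hk1 /interp /=.
  have -> : x + Dst k a r j = (B0 + j) * k + r0 by rewrite Dst_pre; lia.
  by have [-> _] := divmodS (B0 + j) hr0.
case: (ltnP j (a + r)) => h2 /=.

  have hW : x + Dst k a r j = (B0 + a) * k + (r0 + (j - a)) by rewrite Dst_mid; lia.
  rewrite /col1 /= div_modn_split // mod_modn_split // hW.
  case: (ltnP (r0 + (j - a)) k) => h3.
    have [-> ->] := divmodS (B0 + a) h3.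
    case: ifP => h4.
      have h5 : r0 + (j - a) < k.-1 = false by apply/negbTE; lia.
      by rewrite h5 /interp.
    have h5 : r0 + (j - a) < k.-1 by lia.
    rewrite h5 -/sb. case: ifP => h6 /=; rewrite /interp /=.
      by rewrite -addn1 modnDml addn1 addnS.
    lia.
  have h3' : r0 + (j - a) - k < k by lia.
  have hW' : (B0 + a) * k + (r0 + (j - a)) = (B0 + a).+1 * k + (r0 + (j - a) - k) by rewrite mulSn; lia.
  rewrite hW'. have [-> ->] := divmodS (B0 + a).+1 h3'.
  have h4 : r0 + (j - a) < k.-1 = false by apply/negbTE; lia.
  have h5 : r0 + (j - a) == k.-1 = false by apply/negbTE; lia.
  have h5' : r0 + (j - a) - k == k.-1 = false by apply/negbTE; lia.
  rewrite h4 h5 h5' -/sb'. case: ifP => h6 /=; rewrite /interp /=.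
    by rewrite -addn1 modnDml addn1 !addnS.
  lia.
have hk1 : (k == 1) = false by apply/eqP; lia.
rewrite hk1 /interp /=.
have h3 : r0 + r - k * cb < k by rewrite /cb; case: leqP; lia.
have -> : x + Dst k a r j = (B0 + (j - r + cb)) * k + (r0 + r - k * cb).
  rewrite Dst_post //. rewrite /cb; case: leqP => h4 /=.
    have -> : B0 + (j - r + 1) = (B0 + a + (j - (a + r))).+1 by lia.
    rewrite mulSn !mulnDl; lia.
  have -> : B0 + (j - r + 0) = (B0 + a + (j - (a + r))) by lia.
  rewrite !mulnDl; lia.
by have [-> _] := divmodS (B0 + (j - r + cb)) h3.
Qed.


Let hsb : sb <= k - 2. Proof. rewrite /sb /sf; lia. Qed.
Let hsb' : sb' <= k - 2. Proof. rewrite /sb' /sf; lia. Qed.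

Hypothesis HV1 : r0 <= sb -> sb < r0 + r -> q + cb <= a.+1 /\ a.+2 <= an.
Hypothesis HV2 : cb -> sb' < r0 + r - k -> q <= a.+1 /\ a.+3 <= an.

Lemma code_blk j : j < q + r -> (code j).1 -> (code j).2 < an.
Proof.
move=> hj. rewrite /code.
repeat (case: ifP => ? /=); move=> //= _.
all: have := HV1; have := HV2; rewrite /cb; case: leqP; lia.
Qed.

Lemma code_pre j : j < a -> code j = (true, j).
Proof. by move=> h; rewrite /code h. Qed.

Lemma code_post j : a + r <= j -> code j = (true, j - r + cb).
Proof. move=> h; rewrite /code. have -> : (j < a) = false by apply/negbTE; lia.
by have -> : (j < a + r) = false by apply/negbTE; lia. Qed.

Lemma code_ones_blk j c : a <= j < a + r -> code j = (true, c) ->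
  [\/ c = a /\ cb, (c = a.+1 /\ q + cb <= a.+1 /\ a.+2 <= an) | (c = a.+2 /\ cb /\ q <= a.+1 /\ a.+3 <= an)].
Proof.
move=> /andP [h1 h2]. rewrite /code. have -> : (j < a) = false by apply/negbTE; lia.
rewrite h2.
case: ifP => h3.
  case: ifP => h4 // [<-]. apply: Or32. split => //; apply: HV1; lia.
case: ifP => h4.
  move=> [<-]; apply: Or31; split => //; rewrite /cb; lia.
case: ifP => h5 // [<-]. apply: Or33. have hc : cb by rewrite /cb; lia.
have := HV2 hc. split => //. lia.
Qed.

Lemma code_ones_inj i j : a <= i < a + r -> a <= j < a + r -> code i = code j -> i = j.
Proof.
move=> /andP [h1 h2] /andP [h3 h4]. rewrite /code.
have -> : (j < a) = false by apply/negbTE; lia.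
have -> : (i < a) = false by apply/negbTE; lia.
rewrite h2 h4.
move: hsb hsb'. clear HV1 HV2.
repeat (case: ifP => ? /=).
all: move=> ? ? E; have E1 := congr1 fst E; have E2 := congr1 snd E; simpl in E1, E2; clear E; try discriminate.
all: lia.
Qed.


Lemma code_ext j : j < q + r -> ~~ (code j).1 -> (code j).2 < k - 2.
Proof.
move=> hj. rewrite /code.
case: ifP => h1 //=. case: ifP => h2 //=.
move: hsb hsb'. clear HV1 HV2.
repeat (case: ifP => ? /=); move=> ? ? //= _; lia.
Qed.

Lemma interp_lt j : j < q + r -> interp (code j) < an + k - 2.
Proof.
move=> hj. rewrite /interp. case: ifP => h.
  have := ltn_pmod (B0 + (code j).2) (ltnW (ltnW han)). lia.
have := code_ext hj. rewrite h => /(_ isT). lia.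
Qed.

Lemma interp_inj (c1 c2 : bool * nat) : (c1.1 -> c1.2 < an) -> (c2.1 -> c2.2 < an) ->
  interp c1 = interp c2 -> c1 = c2.
Proof.
case: c1 c2 => [[] u] [[] v] /= hu hv; rewrite /interp /=.
- move=> /eqP; rewrite eqn_modDl !modn_small ?hu ?hv // => /eqP -> //.
- have := ltn_pmod (B0 + u) (ltnW (ltnW han)). lia.
- have := ltn_pmod (B0 + v) (ltnW (ltnW han)). lia.
- by move=> /eqP; rewrite eqn_add2l => /eqP ->.
Qed.

Lemma code_inj_all i j : i < q + r -> j < q + r -> code i = code j -> i = j.
Proof.
move=> hi hj.
case: (ltnP i a) => hia; case: (ltnP j a) => hja.
- by rewrite !code_pre // => -[].
- rewrite code_pre //. case: (ltnP j (a + r)) => hjr.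
    move/esym/code_ones_blk. case/(_ _)/Wrap. lia. case; lia.
  rewrite code_post // => -[]. lia.
- rewrite (code_pre hja). case: (ltnP i (a + r)) => hir.
    move/code_ones_blk. case/(_ _)/Wrap. lia. case; lia.
  rewrite code_post // => -[]. lia.
case: (ltnP i (a + r)) => hir; case: (ltnP j (a + r)) => hjr.
- apply: code_ones_inj; lia.
- rewrite (code_post hjr) => /code_ones_blk. case/(_ _)/Wrap. lia. rewrite /cb; case; lia.
- rewrite (code_post hir) => /esym /code_ones_blk. case/(_ _)/Wrap. lia. rewrite /cb; case; lia.
- rewrite !code_post // => -[]. lia.
Qed.

Lemma rainbow_pathO (np : 0 < an * k) (mp : 0 < an + k - 2) :
  uniq (pairmap (fun u v : 'I_(an * k) => ordn mp (cval u v)) x (pathO np x a r q)).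
Proof.
rewrite (bool_irrelevance np npos) /pathO -[X in pairmap _ X _](vert0 npos x a r) pairmap_iota.
rewrite map_inj_in_uniq ?iota_uniq // => i j; rewrite !mem_iota => /andP[_ hi] /andP[_ hj] /(congr1 val) /=.
have := cv_code hi; have := cv_code hj; rewrite /vj => -> ->.
rewrite !modn_small ?interp_lt //.
move=> /interp_inj E. apply: code_inj_all => //. apply: E; apply: code_blk => //.
Qed.
End Colour.


Lemma choose_a an k B0 r0 q r :
  3 <= k -> k - 1 <= an -> 3 <= an -> B0 < an -> r0 < k -> q < an -> r < k ->
  exists a, a <= q /\
   (r0 <= sf k ((B0 + a) %% an) -> sf k ((B0 + a) %% an) < r0 + r ->
      q + (k <= r0 + r) <= a.+1 /\ a.+1 < an) /\
   (k <= r0 + r -> sf k ((B0 + a).+1 %% an) < r0 + r - k -> q <= a.+1 /\ a.+2 < an).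
Proof.
move=> hk han han3 hB hr0 hq hr.
case: (leqP k (r0 + r)) => hc; last first.
  exists q.-1; split; first lia. split; last lia.
  move=> _ _. lia.
set t := r0 + r - k.
have ht1 : t <= r0 - 1 by rewrite /t; lia.
have ht2 : t <= k - 2 by rewrite /t; lia.
case: (leqP q (an - 3)) => hq3.
  exists q; split => //; split => _ _; lia.
have hsf : forall b, b <= k - 2 -> sf k b = b by move=> b hb; rewrite /sf; lia.
have key : forall a, (B0 + a) %% an = t.-1 -> a <= q ->
   exists a, a <= q /\
   (r0 <= sf k ((B0 + a) %% an) -> sf k ((B0 + a) %% an) < r0 + r ->
      q + true <= a.+1 /\ a.+1 < an) /\
   (true -> sf k ((B0 + a).+1 %% an) < t -> q <= a.+1 /\ a.+2 < an).
  move=> a ha haq. exists a; split => //; split.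
    rewrite ha hsf; [lia|lia].
  move=> _. have e : (B0 + a).+1 %% an = (t.-1).+1 %% an by rewrite -addn1 -(modnDml (B0 + a) 1 an) ha addn1.
  rewrite e modn_small; last lia.
  rewrite /sf -/t. lia.
case: (boolP ((q == an - 1) || (B0 != maxn t 1))) => hcase.
  case: (leqP B0 t.-1) => hBt.
    apply: (key (t.-1 - B0)); last lia.
    rewrite subnKC // modn_small //; lia.
  apply: (key (t.-1 + an - B0)); last lia.
  have -> : B0 + (t.-1 + an - B0) = t.-1 + an by lia.
  rewrite modnDr modn_small //; lia.
have hq2 : q = an - 2 by lia.
have hB1 : B0 = maxn t 1 by lia.
case: (posnP t) => ht0.
  exists q; split => //; split => _; [lia|]. rewrite -/t ht0 //.
case: (ltnP t.+1 an) => hta.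
  exists 0; split; first lia. rewrite addn0 hB1.
  have -> : maxn t 1 = t by lia.
  rewrite (modn_small (_ : t < an)); last lia.
  rewrite (modn_small (_ : t.+1 < an)) //.
  split.
    rewrite hsf; lia.
  rewrite /sf -/t; lia.
exists q.-1; split; first lia. split.
  rewrite /sf; lia.
move=> _ _; lia.
Qed.


Lemma src_to_rc n (D : rel 'I_n) m : src_colourable D m -> rc_colourable D m.
Proof.
case=> c Hc; exists c => x y hxy. have [p [h1 h2 _]] := Hc x y hxy.
by exists p; rewrite h1 h2.
Qed.

Lemma rc_lower an k m : 0 < k -> 2 <= an ->
  rc_colourable (circulant (an * k) [:: 1; k]) m -> an + k - 2 <= m.
Proof.
move=> kpos han [c Hc].
have np : 0 < an * k by nia.
have hxy : ordn np 0 != ordn np (an * k - 1).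
  apply/eqP => /(congr1 val) /=. rewrite !modn_small; lia.
have [p /andP [hp hr]] := Hc _ _ hxy.
have := min_walk kpos hp.
have hd : ((ordn np (an * k - 1) : nat) + an * k - ordn np 0) %% (an * k) = (an - 1) * k + (k - 1).
  have v0 : val (ordn np 0) = 0 by rewrite /= mod0n.
  have v1 : val (ordn np (an*k-1)) = an*k - 1 by rewrite /= modn_small; lia.
  rewrite v0 v1 subn0 modnDr modn_small; last lia.
  rewrite mulnBl mul1n. nia.
rewrite hd. have hk1 : k - 1 < k by lia.
have [-> ->] := @divmodS k (an - 1) (k - 1) hk1.
have : size (pairmap c (ordn np 0) p) <= m.
  move/card_uniqP: hr => <-. exact: (leq_trans (max_card _) (eq_leq (card_ord m))).
rewrite size_pairmap. lia.
Qed.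

Lemma src_from an k m (np : 0 < an * k) (c : 'I_(an * k) -> 'I_(an * k) -> 'I_m) :
  0 < k -> k < an * k -> 1 < an * k ->
  (forall x y : 'I_(an * k), x != y -> exists a,
     a <= (y + an * k - x) %% (an * k) %/ k /\
     rainbow c x (pathO np x a ((y + an * k - x) %% (an * k) %% k) ((y + an * k - x) %% (an * k) %/ k))) ->
  strongly_rainbow_connected (circulant (an * k) [:: 1; k]) c.
Proof.
move=> kpos kn onen H x y hxy.
have [a [haq hrb]] := H x y hxy.
set d := (y + an * k - x) %% (an * k) in haq hrb *.
have hdn : d < an * k by apply: ltn_pmod.
have hq : d %/ k < an by rewrite ltn_divLR.
have hr : d %% k < k by apply: ltn_pmod.
exists (pathO np x a (d %% k) (d %/ k)); split => //.
- have := dipath_pathO np kpos kn onen x haq hq hr.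
  have -> // : ordn np (x + (d %/ k * k + d %% k)) = y.
  apply: val_inj => /=. rewrite -divn_eq /d modnDmr addnBA; last by rewrite ltnW // ltn_addl.
  by rewrite addnC addnK modnDr modn_small.
- move=> q' hq'. rewrite size_pathO. exact: min_walk hq'.
Qed.

Lemma src_upper_gen an k : 3 <= k -> k - 1 <= an -> 3 <= an ->
  src_colourable (circulant (an * k) [:: 1; k]) (an + k - 2).
Proof.
move=> hk han han3.
have np : 0 < an * k by nia.
have mp : 0 < an + k - 2 by lia.
exists (fun u v : 'I_(an * k) => ordn mp (cval an k u v)).
apply: (@src_from an k _ np); [lia|nia|nia|].
move=> x y _.
set d := (y + an * k - x) %% (an * k).
have hdn : d < an * k by apply: ltn_pmod; nia.
have hq : d %/ k < an by rewrite ltn_divLR //; lia.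
have hr : d %% k < k by apply: ltn_pmod; lia.
have hB : x %/ k < an by rewrite ltn_divLR; [exact: ltn_ord|lia].
have hr0 : x %% k < k by apply: ltn_pmod; lia.
have [a [haq [h1 h2]]] := choose_a hk han han3 hB hr0 hq hr.
exists a; split => //.
exact: rainbow_pathO.
Qed.

Definition np6 : 0 < 2 * 3 := isT.
Definition mp6 : 0 < 2 + 3 - 2 := isT.
Definition col6 (u v : 'I_(2 * 3)) : 'I_(2 + 3 - 2) :=
  ordn mp6 (if (v + 2 * 3 - u) %% (2 * 3) == 1 then nth 0 [:: 0; 1; 2; 1; 2; 1] u else 0).

Definition chk6 (xv yv : nat) : bool :=
  let x := ordn np6 xv in let y := ordn np6 yv in
  (x != y) ==>
  has (fun a => (a <= (y + 2 * 3 - x) %% (2 * 3) %/ 3) &&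
    uniq (pairmap col6 x (pathO np6 x a ((y + 2 * 3 - x) %% (2 * 3) %% 3) ((y + 2 * 3 - x) %% (2 * 3) %/ 3))))
   (iota 0 2).

Lemma good6 : all (fun xv => all (fun yv => chk6 xv yv) (iota 0 6)) (iota 0 6).
Proof. vm_compute. reflexivity. Qed.

Lemma ordn6 (x : 'I_(2 * 3)) : ordn np6 x = x.
Proof. by apply: val_inj; rewrite /= modn_small. Qed.

Lemma src_upper_6 : src_colourable (circulant (2 * 3) [:: 1; 3]) (2 + 3 - 2).
Proof.
exists col6. apply: (@src_from 2 3 _ np6) => // x y hxy.
have := good6 => /allP /(_ x). rewrite mem_iota ltn_ord => /(_ isT) /allP /(_ y).
rewrite mem_iota ltn_ord => /(_ isT). rewrite /chk6 !ordn6 hxy /=.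
case/orP => [h|/orP [/andP [h1 h2]|//]]; first by exists 0.
by exists 1.
Qed.

Theorem theorem11 (k an : nat) :
  2 <= k - 1 -> k - 1 <= an ->
  src_star_eq (circulant (an * k) [:: 1; k]) (an + k - 2) /\
  rc_star_eq (circulant (an * k) [:: 1; k]) (an + k - 2).
Proof.
move=> h1 h2.
have hup : src_colourable (circulant (an * k) [:: 1; k]) (an + k - 2).
  case: (leqP 3 an) => h3; first by apply: src_upper_gen; lia.
  have -> : an = 2 by lia. have -> : k = 3 by lia. exact: src_upper_6.
have hlow : forall m, rc_colourable (circulant (an * k) [:: 1; k]) m -> an + k - 2 <= m.
  by move=> m; apply: rc_lower; lia.
split; split.
- exact: hup.
- by move=> m /src_to_rc; apply: hlow.
- exact: src_to_rc hup.
- exact: hlow.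
Qed.
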